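(* Let $m\ge n$, $0\le r<n$, $A^1,\dots,A^l\in\mathbb{R}^{m\times n}$, $b\in\mathbb{R}^l$, and let $X\in\mathcal{L}\cap\mathcal{M}(r)$ with $\operatorname{rank}(X)=s$ and SVD $X=U\Sigma V^\top$ as in the context. Then: (i) if Assumption 1 holds at $X$, then $\mathrm{N}^M_{\mathcal{M}(r)}(X)\cap\mathrm{N}_{\mathcal{L}}(X)=\{O\}$; (ii) if Assumption 2 holds at $X$, then for every index set $J\subseteq\{1,\dots,n\}$ with $\Gamma\subseteq J$, $\mathrm{N}_{\mathcal{M}_X(J)}(X)\cap\mathrm{N}_{\mathcal{L}}(X)=\{O\}$, where $\mathcal{M}_X(J)=\{UBV_J^\top:B\in\mathbb{R}^{m\times |J|}\}$ and $\mathrm{N}_{\mathcal{M}_X(J)}(X)=\{W: U^\top WV_J=O\}$ is its orthogonal complement.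
   Context: $\langle X,Y\rangle=\sum_{i,j}X_{ij}Y_{ij}$ on $\mathbb{R}^{m\times n}$; $O$ is the zero matrix. $\mathcal{A}(X)=(\langle A^1,X\rangle,\dots,\langle A^l,X\rangle)^\top$, $\mathcal{L}=\{X:\mathcal{A}(X)=b\}$, $\mathcal{M}(r)=\{X:\operatorname{rank}(X)\le r\}$, $\mathrm{N}_{\mathcal{L}}(X)=\{\sum_{i=1}^l y_iA^i: y\in\mathbb{R}^l\}$. SVD convention: $X=U\Sigma V^\top$ with $U$ ($m\times m$) and $V$ ($n\times n$) orthogonal, $\Sigma$ with diagonal $\sigma_1\ge\dots\ge\sigma_s>0$ followed by zeros, $\Gamma=\{1,\dots,s\}$, $\Gamma_m^\perp=\{s+1,\dots,m\}$, $\Gamma_n^\perp=\{s+1,\dots,n\}$; $U_J$, $V_J$ denote column submatrices indexed by $J$. Normal space of the fixed-rank manifold $\mathcal{M}^s=\{X:\operatorname{rank}X=s\}$: $\mathrm{N}_{\mathcal{M}^s}(X)=\{U_{\Gamma_m^\perp}DV_{\Gamma_n^\perp}^\top:D\in\mathbb{R}^{(m-s)\times(n-s)}\}$. Cones: for closed $\Omega$, $X\in\Omega$, $\mathrm{T}^B_\Omega(X)$ is the set of $\Xi$ with $X^k\in\Omega$, $X^k\to X$, $t_k\downarrow0$, $(X^k-X)/t_k\to\Xi$; $\mathrm{N}^F_\Omega(X)$ is its polar $\{Y:\langle Y,\Xi\rangle\le0\ \forall\Xi\in \mathrm{T}^B_\Omega(X)\}$; the Mordukhovich normal cone $\mathrm{N}^M_\Omega(X)$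 is the set of limits of sequences $W^k\in\mathrm{N}^F_\Omega(X^k)$ with $X^k\in\Omega$, $X^k\to X$. Define $T^i_X=\begin{bmatrix}U_\Gamma^\top A^iV_\Gamma & U_\Gamma^\top A^iV_{\Gamma_n^\perp}\\ U_{\Gamma_m^\perp}^\top A^iV_\Gamma & O\end{bmatrix}$ and $R^i_X=U^\top A^iV_\Gamma$, $i=1,\dots,l$. Assumption 1 at $X$: $T^1_X,\dots,T^l_X$ are linearly independent. Assumption 2 at $X$: $R^1_X,\dots,R^l_X$ are linearly independent. *)

(* Defs.v *)
From HB Require Import structures.
From mathcomp Require Import all_boot all_order all_algebra.
From mathcomp Require Import all_classical all_reals all_analysis.
Set Implicit Arguments. Unset Strict Implicit. Unset Printing Implicit Defensive.
Import Order.TTheory GRing.Theory Num.Theory.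
Import numFieldNormedType.Exports.
Local Open Scope classical_set_scope.
Local Open Scope ring_scope.

Section Defs.
Variable R : realType.

Definition frob (m n : nat) (X Y : 'M[R]_(m, n)) : R :=
  \sum_(i < m) \sum_(j < n) X i j * Y i j.

Definition Lset (m n l : nat) (A : 'I_l -> 'M[R]_(m, n)) (b : 'I_l -> R)
  : set 'M[R]_(m, n) := [set X | forall i, frob (A i) X = b i].

Definition Mrank (m n r : nat) : set 'M[R]_(m, n) :=
  [set X | (\rank X <= r)%N].

(* N_L(X) = { sum_i y_i A^i : y in R^l } *)
Definition NL (m n l : nat) (A : 'I_l -> 'M[R]_(m, n)) : set 'M[R]_(m, n) :=
  [set W | exists y : 'I_l -> R, W = \sum_(i < l) y i *: A i].

Definition tangentB (m n : nat) (Om : set 'M[R]_(m, n)) (X : 'M[R]_(m, n))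
  : set 'M[R]_(m, n) :=
  [set Xi | exists (Xk : nat -> 'M[R]_(m, n)) (t : nat -> R),
     (forall k, Om (Xk k)) /\ Xk @ \oo --> X /\
     (forall k, 0 < t k) /\ t @ \oo --> (0 : R) /\
     (fun k => (t k)^-1 *: (Xk k - X)) @ \oo --> Xi].

Definition normalF (m n : nat) (Om : set 'M[R]_(m, n)) (X : 'M[R]_(m, n))
  : set 'M[R]_(m, n) :=
  [set Y | forall Xi, tangentB Om X Xi -> frob Y Xi <= 0].

Definition normalM (m n : nat) (Om : set 'M[R]_(m, n)) (X : 'M[R]_(m, n))
  : set 'M[R]_(m, n) :=
  [set W | exists (Xk Wk : nat -> 'M[R]_(m, n)),
     (forall k, Om (Xk k)) /\ (forall k, normalF Om (Xk k) (Wk k)) /\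
     Xk @ \oo --> X /\ Wk @ \oo --> W].

Definition lin_indep (l p q : nat) (F : 'I_l -> 'M[R]_(p, q)) : Prop :=
  forall y : 'I_l -> R, \sum_(i < l) y i *: F i = 0 -> forall i, y i = 0.

Definition orthogonal_mx (k : nat) (U : 'M[R]_k) : Prop := U^T *m U = 1%:M.

(* SVD as in the context: X = U Sigma V^T, U, V orthogonal, Sigma has diagonal
   sigma_1 >= ... >= sigma_s > 0 followed by zeros (0-based indices here). *)
Definition is_svd (m n s : nat) (X : 'M[R]_(m, n)) (U : 'M[R]_m) (V : 'M[R]_n)
  (Sig : 'M[R]_(m, n)) : Prop :=
  orthogonal_mx U /\ orthogonal_mx V /\ X = U *m Sig *m V^T /\
  exists sigma : nat -> R,
    (forall k, (k < s)%N -> 0 < sigma k) /\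
    (forall k1 k2, (k1 <= k2)%N -> (k2 < s)%N -> sigma k2 <= sigma k1) /\
    Sig = \matrix_(i, j) (if ((i : nat) == j) && (i < s)%N then sigma i else 0).

(* T^i_X = [[U_G^T A V_G, U_G^T A V_Gperp],[U_Gperp^T A V_G, O]],
   i.e. U^T A V with its lower-right (m-s)x(n-s) block set to zero *)
Definition Tmx (m n s : nat) (U : 'M[R]_m) (V : 'M[R]_n) (Ai : 'M[R]_(m, n))
  : 'M[R]_(m, n) :=
  \matrix_(i, j) (if (s <= i)%N && (s <= j)%N then 0 else (U^T *m Ai *m V) i j).

Definition VGamma (n s : nat) (hsn : (s <= n)%N) (V : 'M[R]_n) : 'M[R]_(n, s) :=
  colsub (widen_ord hsn) V.

Definition Rmx (m n s : nat) (hsn : (s <= n)%N) (U : 'M[R]_m) (V : 'M[R]_n)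
  (Ai : 'M[R]_(m, n)) : 'M[R]_(m, s) := U^T *m Ai *m VGamma hsn V.

Definition VJ (n : nat) (J : {set 'I_n}) (V : 'M[R]_n) : 'M[R]_(n, #|J|) :=
  colsub (fun k : 'I_#|J| => enum_val k) V.

Definition NMXJ (m n : nat) (J : {set 'I_n}) (U : 'M[R]_m) (V : 'M[R]_n)
  : set 'M[R]_(m, n) := [set W | U^T *m W *m VJ J V = 0].

End Defs.

(* Main.v *)
Require Import Defs.
From HB Require Import structures.
From mathcomp Require Import all_boot all_order all_algebra.
From mathcomp Require Import all_classical all_reals all_analysis.
Import Order.TTheory GRing.Theory Num.Theory.
Import numFieldNormedType.Exports.
Local Open Scope classical_set_scope.
Local Open Scope ring_scope.

Section Helpers.
Variable R : realType.

Lemma cvg_entry m n (f : nat -> 'M[R]_(m,n)) (M : 'M[R]_(m,n)) i j :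
  f @ \oo --> M -> (fun k => f k i j) @ \oo --> M i j.
Proof.
move=> /cvg_mx_entourageP h.
apply: (proj2 (@cvg_entourageP R ((fun k => f k i j) @ \oo) _ (M i j))).
move=> A entA.
have := h A entA. rewrite !near_simpl. apply: filterS => N /(_ i j); rewrite inE.
by [].
Qed.

Lemma cvg_bigsum (I : Type) (r : seq I) (f : I -> nat -> R) (a : I -> R) :
  (forall i, f i @ \oo --> a i) ->
  (fun k => \sum_(i <- r) f i k) @ \oo --> \sum_(i <- r) a i.
Proof.
move=> h; elim: r => [|x r IH].
  rewrite big_nil; under eq_fun do rewrite big_nil; exact: cvg_cst.
rewrite big_cons; under eq_fun do rewrite big_cons.
exact: cvgD.
Qed.

Lemma cvg_mulmxT m n p (f : nat -> 'M[R]_(m,n)) (g : nat -> 'M[R]_(p,n)) (F : 'M[R]_(m,n)) (G : 'M[R]_(p,n)) i j :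
  f @ \oo --> F -> g @ \oo --> G ->
  (fun k => (f k *m (g k)^T) i j) @ \oo --> (F *m G^T) i j.
Proof.
move=> hf hg; rewrite mxE; under eq_fun do rewrite mxE.
apply: cvg_bigsum => c; rewrite mxE; under eq_fun do rewrite mxE.
by apply: cvgM; apply: cvg_entry.
Qed.

Lemma cvg_mulTmx m n p (f : nat -> 'M[R]_(m,n)) (g : nat -> 'M[R]_(m,p)) (F : 'M[R]_(m,n)) (G : 'M[R]_(m,p)) i j :
  f @ \oo --> F -> g @ \oo --> G ->
  (fun k => ((f k)^T *m g k) i j) @ \oo --> (F^T *m G) i j.
Proof.
move=> hf hg; rewrite mxE; under eq_fun do rewrite mxE.
apply: cvg_bigsum => c; rewrite mxE; under eq_fun do rewrite mxE.
by apply: cvgM; apply: cvg_entry.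
Qed.

Lemma lim0_eq (u : nat -> R) a : (forall k, u k = 0) -> u @ \oo --> a -> a = 0.
Proof.
move=> h; have -> : u = fun=> 0 by apply: funext.
move=> hu; have h0 : (fun=> (0:R)) @ \oo --> (0:R) by apply: cvg_cst.
exact: (cvg_unique _ hu h0).
Qed.


Lemma frobN m n (W Z : 'M[R]_(m,n)) : frob W (- Z) = - frob W Z.
Proof.
rewrite /frob -sumrN; apply: eq_bigr => a _; rewrite -sumrN.
by apply: eq_bigr => c _; rewrite mxE mulrN.
Qed.

Lemma frob_delR m n (Y W : 'M[R]_(m,n)) (i j : 'I_n) :
  frob W (Y *m delta_mx i j) = (Y^T *m W) i j.
Proof.
have e a c : (Y *m delta_mx i j) a c = if c == j then Y a i else 0.
  rewrite mxE (bigD1 i) //= big1 => [|k hk]; last by rewrite mxE (negbTE hk) mulr0.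
  by rewrite mxE eqxx addr0; case: eqP => _; rewrite ?mulr1 ?mulr0.
rewrite /frob mxE; apply: eq_bigr => a _.
rewrite (bigD1 j) //= big1 => [|c hc]; last by rewrite e (negbTE hc) mulr0.
by rewrite e eqxx addr0 mxE mulrC.
Qed.

Lemma frob_delL m n (Y W : 'M[R]_(m,n)) (i j : 'I_m) :
  frob W (delta_mx i j *m Y) = (W *m Y^T) i j.
Proof.
have e a c : (delta_mx i j *m Y) a c = if a == i then Y j c else 0.
  rewrite mxE (bigD1 j) //= big1 => [|k hk]; last by rewrite mxE (negbTE hk) andbF mul0r.
  by rewrite mxE eqxx andbT addr0; case: eqP => _; rewrite ?mul1r ?mul0r.
rewrite /frob (bigD1 i) //=.
rewrite [X in _ + X]big1 => [|a ha]; last first.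
  by apply: big1 => c _; rewrite e (negbTE ha) mulr0.
rewrite addr0 mxE; apply: eq_bigr => c _.
by rewrite e eqxx mxE.
Qed.

Lemma tangent_lin m n r (Y Z : 'M[R]_(m,n)) :
  (forall t : R, Mrank r (Y + t *: Z)) -> tangentB (Mrank r) Y Z.
Proof.
move=> h; exists (fun k => Y + harmonic k *: Z), harmonic.
split; first by move=> k; apply: h.
split.
  have : (fun k => Y + harmonic k *: Z) @ \oo --> Y + 0 *: Z.
    apply: cvgD; first exact: cvg_cst.
    apply: cvgZ; [exact: cvg_harmonic | exact: cvg_cst].
  by rewrite scale0r addr0.
split; first by move=> k; apply: harmonic_gt0.
split; first exact: cvg_harmonic.
have -> : (fun k => (harmonic k)^-1 *: (Y + harmonic k *: Z - Y)) = fun=> Z.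
  apply: funext => k; rewrite addrAC subrr add0r scalerA mulVf ?scale1r //.
  by apply: lt0r_neq0; apply: harmonic_gt0.
exact: cvg_cst.
Qed.

Lemma normalF_perp m n r (Y W : 'M[R]_(m,n)) :
  Mrank r Y -> normalF (Mrank r) Y W -> Y^T *m W = 0 /\ W *m Y^T = 0.
Proof.
rewrite /Mrank /= => hY hW.
have hR (B : 'M[R]_n) : frob W (Y *m B) = 0.
  have t1 : tangentB (Mrank r) Y (Y *m B).
    apply: tangent_lin => t; rewrite /Mrank /=.
    rewrite scalemxAr -{1}(mulmx1 Y) -mulmxDr.
    exact: leq_trans (mxrankM_maxl _ _) hY.
  have t2 : tangentB (Mrank r) Y (- (Y *m B)).
    apply: tangent_lin => t; rewrite /Mrank /=.
    rewrite scalerN -scaleNr scalemxAr -{1}(mulmx1 Y) -mulmxDr.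
    exact: leq_trans (mxrankM_maxl _ _) hY.
  have := hW _ t1; have := hW _ t2; rewrite frobN oppr_le0 => h1 h2.
  by apply/eqP; rewrite eq_le h2 h1.
have hL (B : 'M[R]_m) : frob W (B *m Y) = 0.
  have t1 : tangentB (Mrank r) Y (B *m Y).
    apply: tangent_lin => t; rewrite /Mrank /=.
    rewrite scalemxAl -{1}(mul1mx Y) -mulmxDl.
    exact: leq_trans (mxrankM_maxr _ _) hY.
  have t2 : tangentB (Mrank r) Y (- (B *m Y)).
    apply: tangent_lin => t; rewrite /Mrank /=.
    rewrite scalerN -scaleNr scalemxAl -{1}(mul1mx Y) -mulmxDl.
    exact: leq_trans (mxrankM_maxr _ _) hY.
  have := hW _ t1; have := hW _ t2; rewrite frobN oppr_le0 => h1 h2.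
  by apply/eqP; rewrite eq_le h2 h1.
split; apply/matrixP => i j.
  by rewrite -frob_delR hR mxE.
by rewrite -frob_delL hL mxE.
Qed.


Lemma normalM_perp m n r (X W : 'M[R]_(m,n)) :
  normalM (Mrank r) X W -> X^T *m W = 0 /\ W *m X^T = 0.
Proof.
move=> [Xk [Wk [hXk [hWk [cX cW]]]]].
have hp k := @normalF_perp _ _ _ _ _ (hXk k) (hWk k).
split; apply/matrixP => i j; rewrite [in RHS]mxE.
  apply: (@lim0_eq (fun k => ((Xk k)^T *m Wk k) i j)).
    by move=> k; rewrite (hp k).1 mxE.
  exact: cvg_mulTmx.
apply: (@lim0_eq (fun k => (Wk k *m (Xk k)^T) i j)).
  by move=> k; rewrite (hp k).2 mxE.
exact: cvg_mulmxT.
Qed.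

Lemma mul_sum_lin l p m n q (P : 'M[R]_(p,m)) (Q : 'M[R]_(n,q))
  (y : 'I_l -> R) (A : 'I_l -> 'M[R]_(m,n)) :
  P *m (\sum_(i < l) y i *: A i) *m Q = \sum_(i < l) y i *: (P *m A i *m Q).
Proof.
rewrite mulmx_sumr mulmx_suml; apply: eq_bigr => i _.
by rewrite -scalemxAr -scalemxAl.
Qed.

Lemma svd_blocks m n s (X W : 'M[R]_(m,n)) U V Sig :
  (n <= m)%N -> (s <= n)%N -> is_svd s X U V Sig ->
  X^T *m W = 0 -> W *m X^T = 0 ->
  forall (i : 'I_m) (j : 'I_n), ((i : nat) < s)%N || ((j : nat) < s)%N -> (U^T *m W *m V) i j = 0.
Proof.
move=> hmn hsn [oU [oV [eX [sigma [spos [_ eSig]]]]]] h1 h2.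
set M := U^T *m W *m V.
have e1 : Sig^T *m M = 0.
  have : V^T *m (X^T *m W) *m V = 0 by rewrite h1 mulmx0 mul0mx.
  rewrite eX !trmx_mul trmxK !mulmxA oV mul1mx.
  by [].
have e2 : M *m Sig^T = 0.
  have : U^T *m (W *m X^T) *m U = 0 by rewrite h2 mulmx0 mul0mx.
  rewrite eX !trmx_mul trmxK !mulmxA -(mulmxA _ U^T U) oU mulmx1.
  by [].
move=> i j /orP[hi|hj].
  have hin : (i < n)%N by apply: leq_trans hi hsn.
  have := congr1 (fun N : 'M[R]_n => N (Ordinal hin) j) e1.
  rewrite !mxE (bigD1 i) //= big1 => [|a ha]; last first.
    rewrite !mxE eSig mxE /=.
    have -> : ((a : nat) == i) = false by apply/negbTE; apply: contra ha => /eqP h; apply/eqP/val_inj.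
    by rewrite mul0r.
  rewrite addr0 !mxE eSig mxE /= eqxx hi /= => /eqP.
  by rewrite mulf_eq0 (negbTE (lt0r_neq0 (spos _ hi))) /= => /eqP.
have hjm : (j < m)%N by apply: leq_trans (leq_trans hj hsn) hmn.
have := congr1 (fun N : 'M[R]_m => N i (Ordinal hjm)) e2.
rewrite !mxE (bigD1 j) //= big1 => [|c hc]; last first.
  rewrite !mxE eSig mxE /=.
  have -> : ((j : nat) == c) = false by apply/negbTE; apply: contra hc => /eqP h; apply/eqP/val_inj.
  by rewrite mulr0.
rewrite addr0 !mxE eSig mxE /= eqxx hj /= => /eqP.
by rewrite mulf_eq0 (negbTE (lt0r_neq0 (spos _ hj))) orbF => /eqP.
Qed.

End Helpers.

Theorem proposition3p1 (R : realType) (m n r l s : nat)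
  (A : 'I_l -> 'M[R]_(m, n)) (b : 'I_l -> R)
  (X : 'M[R]_(m, n)) (U : 'M[R]_m) (V : 'M[R]_n) (Sig : 'M[R]_(m, n))
  (hmn : (n <= m)%N) (hrn : (r < n)%N) (hsn : (s <= n)%N)
  (hXL : Lset A b X) (hXM : Mrank r X) (hrank : \rank X = s)
  (hsvd : is_svd s X U V Sig) :
  (lin_indep (fun i => Tmx s U V (A i)) ->
     normalM (Mrank r) X `&` NL A = [set 0]) /\
  (lin_indep (fun i => Rmx hsn U V (A i)) ->
     forall J : {set 'I_n}, (forall j : 'I_n, (j < s)%N -> j \in J) ->
       NMXJ J U V `&` NL A = [set 0]).
Proof.
have NL0 : NL A 0.
  by exists (fun=> 0); rewrite big1 // => i _; rewrite scale0r.
split.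
  move=> hT; apply/seteqP; split => W /=.
    move=> [hM [y eW]].
    have [p1 p2] := @normalM_perp _ _ _ _ _ _ hM.
    have hb := @svd_blocks _ _ _ _ _ _ _ _ _ hmn hsn hsvd p1 p2.
    have hz : \sum_(i < l) y i *: Tmx s U V (A i) = 0.
      apply/matrixP => a c; rewrite summxE [in RHS]mxE.
      under eq_bigr do rewrite mxE mxE.
      case h: ((s <= a)%N && (s <= c)%N).
        by rewrite big1 // => i _; rewrite mulr0.
      have e : \sum_(k < l) (y k *: (U^T *m A k *m V)) a c
          = \sum_(k < l) y k * (U^T *m A k *m V) a c.
        by apply: eq_bigr => k _; rewrite mxE.
      rewrite -e -summxE -mul_sum_lin -eW; apply: hb; move/negbT: h.
      by rewrite negb_and -!ltnNge.
    have y0 := hT y hz.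
    by rewrite eW big1 // => i _; rewrite y0 scale0r.
  move=> ->; split=> //.
  exists (fun=> X), (fun=> 0); split=> //; split.
    move=> k Xi _; rewrite /frob big1 // => a _.
    by rewrite big1 // => c _; rewrite mxE mul0r.
  by split; apply: cvg_cst.
move=> hRi J hJ; apply/seteqP; split => W /=.
  move=> [hN [y eW]].
  have hz : \sum_(i < l) y i *: Rmx hsn U V (A i) = 0.
    rewrite /Rmx -mul_sum_lin -eW.
    apply/matrixP => a k.
    rewrite /VGamma mulmx_colsub [in RHS]mxE mxE.
    have hk : widen_ord hsn k \in J by apply: hJ; rewrite /=.
    have ek := enum_rankK_in hk hk.
    move: hN; rewrite /NMXJ /= /VJ mulmx_colsub => hN.
    have := congr1 (fun N : 'M[R]_(m, #|J|) => N a (enum_rank_in hk (widen_ord hsn k))) hN.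
    by rewrite !mxE ek.
  have y0 := hRi y hz.
  by rewrite eW big1 // => i _; rewrite y0 scale0r.
move=> ->; split=> //.
by rewrite /NMXJ /= mulmx0 mul0mx.
Qed.
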